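(* Let $k\ge1$. For every $1\le j\le k$, the function $D_{k,j}$ is nonincreasing on $[0,1)$.
   Context: For an integer $k\ge1$, $f_k:[0,1]\to[0,1]$ denotes the unique decreasing function satisfying $f_k(x)^k-f_k(x)^{k+1}=x^k-x^{k+1}$ for all $x\in[0,1]$; it is continuous with $f_k(0)=1$, $f_k(1)=0$. For $1\le j\le k$ and $y\in[0,1)$ define $T_{k,j}(y):=\dfrac{(1-y)\,y^{j-1}}{f_k(y)^j}$ and $D_{k,j}(y):=T_{k,1}(y)+T_{k,2}(y)+\dots+T_{k,j}(y)$. *)

(* Defs.v *)
From Stdlib Require Import Reals Lra.
Open Scope R_scope.

(* f is "the" function f_k: decreasing [0,1] -> [0,1] with
   f(x)^k - f(x)^(k+1) = x^k - x^(k+1).  (Unique, as stated in the paper.) *)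
Definition is_fk (k : nat) (f : R -> R) : Prop :=
  (forall x, 0 <= x <= 1 -> 0 <= f x <= 1) /\
  (forall x y, 0 <= x <= 1 -> 0 <= y <= 1 -> x < y -> f y < f x) /\
  (forall x, 0 <= x <= 1 -> f x ^ k - f x ^ (k + 1) = x ^ k - x ^ (k + 1)).

Definition T (f : R -> R) (j : nat) (y : R) : R :=
  (1 - y) * y ^ (j - 1) / f y ^ j.

Fixpoint D (f : R -> R) (j : nat) (y : R) : R :=
  match j with
  | O => 0
  | S i => D f i y + T f (S i) y
  end.

(* Main.v *)
Require Import Defs.
From Stdlib Require Import Reals Lra Lia Psatz.

Definition gg (k:nat) : R -> R := ((fun x => x ^ k) - (fun x => x ^ (k+1)))%F.

Lemma gg_der (k:nat) (t:R) (pr : derivable (gg k)) :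
  derive_pt (gg k) t (pr t) = INR k * t ^ Init.Nat.pred k - INR (k+1) * t ^ Init.Nat.pred (k+1).
Proof.
  apply derive_pt_eq_0. apply derivable_pt_lim_minus; apply derivable_pt_lim_pow.
Qed.

Lemma gg_inc (k:nat) : (1 <= k)%nat -> forall x y,
  0 <= x -> x < y -> y <= INR k / (INR k + 1) ->
  x ^ k - x ^ (k+1) < y ^ k - y ^ (k+1).
Proof.
  intros Hk x y H0 Hxy Hy.
  assert (Hk' : 1 <= INR k) by (apply (le_INR 1); lia).
  pose (pr := derivable_minus _ _ (derivable_pow k) (derivable_pow (k+1))).
  assert (Hc : 0 < INR k / (INR k + 1)) by (apply Rdiv_lt_0_compat; lra).
  pose proof (derive_increasing_interv 0 (INR k / (INR k + 1)) (gg k) pr Hc) as HH.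
  unfold gg, minus_fct in HH. apply HH; try lra.
  intros t Ht. change (0 < derive_pt (gg k) t (pr t)). rewrite gg_der.
  destruct k as [|k']; [lia|]. replace (Init.Nat.pred (S k')) with k' by reflexivity.
  replace (Init.Nat.pred (S k' + 1)) with (S k') by lia.
  change (t ^ S k') with (t * t ^ k'). rewrite plus_INR. change (INR 1) with 1.
  set (K := INR (S k')) in *.
  assert (0 < t ^ k') by (apply pow_lt; lra).
  assert (t * (K + 1) < K).
  { destruct Ht as [_ Ht].
    apply (Rmult_lt_compat_r (K + 1)) in Ht; [|lra].
    unfold Rdiv in Ht. rewrite Rmult_assoc, Rinv_l in Ht; lra. }
  nra.
Qed.

Lemma gg_dec (k:nat) : (1 <= k)%nat -> forall x y,
  INR k / (INR k + 1) <= x -> x < y -> y <= 1 ->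
  y ^ k - y ^ (k+1) < x ^ k - x ^ (k+1).
Proof.
  intros Hk x y H0 Hxy Hy.
  assert (Hk' : 1 <= INR k) by (apply (le_INR 1); lia).
  pose (pr := derivable_opp _ (derivable_minus _ _ (derivable_pow k) (derivable_pow (k+1)))).
  assert (Hc : INR k / (INR k + 1) < 1).
  { apply (Rmult_lt_reg_r (INR k + 1)); [lra|]. unfold Rdiv. rewrite Rmult_assoc, Rinv_l; lra. }
  pose proof (derive_increasing_interv _ _ (- gg k)%F pr Hc) as HH.
  unfold gg, minus_fct, opp_fct in HH. cut (- (x ^ k - x ^ (k + 1)) < - (y ^ k - y ^ (k + 1))). lra.
  apply HH; try lra.
  intros t Ht. change (0 < derive_pt (- gg k)%F t (pr t)).
  rewrite (derive_pt_eq_0 _ _ (- (INR k * t ^ Init.Nat.pred k - INR (k+1) * t ^ Init.Nat.pred (k+1)))).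
  2:{ apply derivable_pt_lim_opp. apply derivable_pt_lim_minus; apply derivable_pt_lim_pow. }
  destruct k as [|k']; [lia|]. replace (Init.Nat.pred (S k')) with k' by reflexivity.
  replace (Init.Nat.pred (S k' + 1)) with (S k') by lia.
  change (t ^ S k') with (t * t ^ k'). rewrite plus_INR. change (INR 1) with 1.
  set (K := INR (S k')) in *.
  assert (K < t * (K + 1)).
  { destruct Ht as [Ht _].
    apply (Rmult_lt_compat_r (K + 1)) in Ht; [|lra].
    unfold Rdiv in Ht. rewrite Rmult_assoc, Rinv_l in Ht; lra. }
  assert (0 < t) by nra.
  assert (0 < t ^ k') by (apply pow_lt; lra).
  nra.
Qed.

Lemma f_pos k f y : is_fk k f -> 0 <= y < 1 -> 0 < f y.
Proof.
  intros [Hr [Hd _]] Hy.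
  assert (H1 := Hr 1 ltac:(lra)). assert (H2 := Hd y 1 ltac:(lra) ltac:(lra) ltac:(lra)). lra.
Qed.

Lemma fix_pt k f y : (1 <= k)%nat -> is_fk k f -> 0 <= y < 1 -> f y = y -> INR k * (1 - y) = y.
Proof.
  intros Hk Hf Hy Hfy. pose proof Hf as [Hr [Hd He]].
  assert (Hk' : 1 <= INR k) by (apply (le_INR 1); lia).
  set (c := INR k / (INR k + 1)).
  assert (Hc : c * (INR k + 1) = INR k) by (unfold c; field; lra).
  assert (Hc1 : 0 < c < 1) by (split; nra).
  destruct (total_order_T y c) as [[Hl|He']|Hg].
  - exfalso. assert (Hx : y < (y + c) / 2 < c) by lra. set (x := (y + c) / 2) in *.
    assert (Hfx := Hd y x ltac:(lra) ltac:(lra) ltac:(lra)).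
    assert (Hfx0 := Hr x ltac:(lra)).
    assert (HH := gg_inc k Hk (f x) x ltac:(lra) ltac:(lra) ltac:(fold c; lra)).
    rewrite He in HH by lra. lra.
  - subst y. nra.
  - exfalso. assert (Hx : c < (y + c) / 2 < y) by lra. set (x := (y + c) / 2) in *.
    assert (Hfx := Hd x y ltac:(lra) ltac:(lra) ltac:(lra)).
    assert (Hfx0 := Hr x ltac:(lra)).
    assert (HH := gg_dec k Hk x (f x) ltac:(fold c; lra) ltac:(lra) ltac:(lra)).
    rewrite He in HH by lra. lra.
Qed.

Fixpoint P (n : nat) (r : R) : R :=
  match n with O => 0 | S m => P m r + r ^ m end.

Lemma P_geom n r : P n r * (1 - r) = 1 - r ^ n.
Proof. induction n; simpl; [ring|]. rewrite Rmult_plus_distr_r, IHn. ring. Qed.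

Lemma P_one n : P n 1 = INR n.
Proof. induction n; simpl P; [reflexivity|]. rewrite IHn, pow1, S_INR. ring. Qed.

Lemma P_add j m r : P (j + m) r = P j r + r ^ j * P m r.
Proof.
  induction m; simpl P.
  - rewrite Nat.add_0_r. ring.
  - rewrite Nat.add_succ_r. simpl P. rewrite IHm, pow_add. ring.
Qed.

Lemma P_nonneg n r : 0 <= r -> 0 <= P n r.
Proof. intros. induction n; simpl; [lra|]. pose proof (pow_le r n H). lra. Qed.


Lemma P_mono m r1 r2 : 0 <= r1 <= r2 -> P m r1 <= P m r2.
Proof.
  intros. induction m; simpl; [lra|]. pose proof (pow_incr r1 r2 m H). lra.
Qed.

Lemma P_cross j r1 r2 : 0 <= r1 <= r2 -> P j r2 * r1 ^ j <= P j r1 * r2 ^ j.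
Proof.
  intros H. induction j; simpl; [lra|].
  pose proof (pow_le r1 j ltac:(lra)). pose proof (pow_le r2 j ltac:(lra)).
  pose proof (P_nonneg j r1 ltac:(lra)). pose proof (P_nonneg j r2 ltac:(lra)).
  assert (P j r2 * (r1 * r1 ^ j) <= P j r1 * (r2 * r2 ^ j)).
  { assert (E1 : P j r2 * r1 ^ j * r1 <= P j r1 * r2 ^ j * r1) by (apply Rmult_le_compat_r; lra).
    assert (E2 : P j r1 * r2 ^ j * r1 <= P j r1 * r2 ^ j * r2) by (apply Rmult_le_compat_l; [apply Rmult_le_pos|]; lra).
    replace (P j r2 * (r1 * r1 ^ j)) with (P j r2 * r1 ^ j * r1) by ring.
    replace (P j r1 * (r2 * r2 ^ j)) with (P j r1 * r2 ^ j * r2) by ring. lra. }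
  assert (r1 ^ j * (r1 * r1 ^ j) <= r1 ^ j * (r2 * r2 ^ j)).
  { pose proof (pow_incr r1 r2 j H). apply Rmult_le_compat_l; [lra|]. apply Rmult_le_compat; lra. }
  replace (P j r2 + r2 ^ j) with (P j r2 + r2 ^ j) by ring.
  replace ((P j r2 + r2 ^ j) * (r1 * r1 ^ j)) with (P j r2 * (r1 * r1 ^ j) + r1 ^ j * (r2 ^ j * r1)) by ring.
  replace ((P j r1 + r1 ^ j) * (r2 * r2 ^ j)) with (P j r1 * (r2 * r2 ^ j) + r1 ^ j * (r2 ^ j * r2)) by ring.
  assert (r1 ^ j * (r2 ^ j * r1) <= r1 ^ j * (r2 ^ j * r2)) by (apply Rmult_le_compat_l; [|apply Rmult_le_compat_l]; lra).
  lra.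
Qed.

Lemma D_eq f j y : 0 < f y -> D f j y = (1 - y) / f y * P j (y / f y).
Proof.
  intros Hv. induction j; simpl D; simpl P; [ring|].
  rewrite IHj. unfold T. replace (S j - 1)%nat with j by lia.
  unfold Rdiv. rewrite Rpow_mult_distr, pow_inv. simpl pow.
  field. split; [apply pow_nonzero|]; lra.
Qed.

Lemma Dk_one k f y : (1 <= k)%nat -> is_fk k f -> 0 <= y < 1 ->
  (1 - y) / f y * P k (y / f y) = 1.
Proof.
  intros Hk Hf Hy. pose proof (f_pos k f y Hf Hy) as Hv.
  pose proof Hf as [_ [_ He]].
  destruct (Req_dec y (f y)) as [E|E].
  - pose proof (fix_pt k f y Hk Hf Hy (eq_sym E)) as Hfix.
    rewrite <- E in *. replace (y / y) with 1 by (field; lra). rewrite P_one.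
    unfold Rdiv. rewrite Rmult_comm, <- Rmult_assoc, Hfix. field. lra.
  - set (v := f y) in *. set (r := y / v).
    assert (Hy' : y = r * v) by (unfold r; field; lra).
    assert (Hr1 : 1 - r <> 0).
    { intro C. apply E. rewrite Hy'. replace r with 1 by lra. ring. }
    pose proof (P_geom k r) as HP.
    specialize (He y ltac:(lra)). fold v in He. rewrite Hy' in He.
    rewrite !pow_add, !Rpow_mult_distr in He. simpl pow in He.
    assert (HA : v ^ k <> 0) by (apply pow_nonzero; lra).
    assert (G : (1 - y) * P k r = v).
    { apply (Rmult_eq_reg_r ((1 - r) * v ^ k)); [|apply Rmult_integral_contrapositive; auto].
      replace ((1 - y) * P k r * ((1 - r) * v ^ k)) with ((1 - y) * v ^ k * (P k r * (1 - r))) by ring.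
      rewrite HP, Hy'. nra. }
    unfold Rdiv. rewrite Rmult_assoc, (Rmult_comm (/ v)), <- Rmult_assoc, G. field. lra.
Qed.

Theorem mainTheorem9 (k : nat) (f : R -> R) :
  (1 <= k)%nat -> is_fk k f ->
  forall j : nat, (1 <= j <= k)%nat ->
  forall y1 y2 : R, 0 <= y1 -> y1 <= y2 -> y2 < 1 ->
  D f j y2 <= D f j y1.
Proof.
  intros Hk Hf j Hj y1 y2 H1 H12 H2.
  pose proof (f_pos k f y1 Hf ltac:(lra)) as Hv1.
  pose proof (f_pos k f y2 Hf ltac:(lra)) as Hv2.
  pose proof (Dk_one k f y1 Hk Hf ltac:(lra)) as K1.
  pose proof (Dk_one k f y2 Hk Hf ltac:(lra)) as K2.
  rewrite !D_eq by assumption.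
  assert (Hvv : f y2 <= f y1).
  { destruct (Req_dec y1 y2) as [->|Hne]; [lra|].
    pose proof Hf as [_ [Hd _]]. left. apply Hd; lra. }
  set (r1 := y1 / f y1) in *. set (r2 := y2 / f y2) in *.
  assert (Hr1 : 0 <= r1) by (unfold r1; unfold Rdiv; apply Rmult_le_pos; [lra| left; apply Rinv_0_lt_compat; lra]).
  assert (Hr12 : r1 <= r2).
  { unfold r1, r2, Rdiv. pose proof (Rinv_le_contravar _ _ Hv2 Hvv).
    pose proof (Rinv_0_lt_compat _ Hv1). apply Rmult_le_compat; lra. }
  set (a1 := (1 - y1) / f y1) in *. set (a2 := (1 - y2) / f y2) in *.
  assert (Ha1 : 0 <= a1) by (unfold a1; unfold Rdiv; apply Rmult_le_pos; [lra| left; apply Rinv_0_lt_compat; lra]).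
  assert (Ha2 : 0 <= a2) by (unfold a2; unfold Rdiv; apply Rmult_le_pos; [lra| left; apply Rinv_0_lt_compat; lra]).
  assert (Cross : P j r2 * P k r1 <= P j r1 * P k r2).
  { replace k with (j + (k - j))%nat by lia. rewrite !P_add.
    pose proof (P_cross j r1 r2 ltac:(lra)).
    pose proof (P_mono (k - j) r1 r2 ltac:(lra)).
    pose proof (P_nonneg (k - j) r1 ltac:(lra)).
    pose proof (P_nonneg j r1 ltac:(lra)).
    pose proof (pow_le r2 j ltac:(lra)).
    assert (P j r2 * r1 ^ j * P (k - j) r1 <= P j r1 * r2 ^ j * P (k - j) r2).
    { apply Rmult_le_compat; try lra. pose proof (P_nonneg j r2 ltac:(lra)). pose proof (pow_le r1 j ltac:(lra)). nra. }
    nra. }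
  replace (a2 * P j r2) with (a2 * a1 * (P j r2 * P k r1)) by (rewrite <- (Rmult_1_r (a2 * P j r2)) at 1; rewrite <- K1; ring).
  replace (a1 * P j r1) with (a2 * a1 * (P j r1 * P k r2)) by (rewrite <- (Rmult_1_r (a1 * P j r1)) at 1; rewrite <- K2; ring).
  apply Rmult_le_compat_l; [nra|exact Cross].
Qed.
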